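(* Assume $\gamma=0$, $L$ is conformal, and $r,s$ are not both roots of unity. Suppose $\mathcal S(r,s)$ is generated by $(jm,m)$ for some integers $j\ge0$, $m>0$ (so $s^m=r^{jm}$), and that $\psi(h)=Ch^j$ with $C\neq0$. Let $M$ be a simple $L$-module with $hM=HM=M$. If $H^m-C^mh^{jm}\in\operatorname{ann}M$, then $\operatorname{ann}M$ contains $u^m$ or $d^m$.
   Context: Let $r,s\in\mathbb C^\times$, $\phi\in\mathbb C[x]$, and $L=L(\phi,r,s,0)$ the associative $\mathbb C$-algebra generated by $u,d,h$ with $hu=ruh$, $dh=rhd$, $du-sud=\phi(h)$. $L$ is conformal if there is $\psi\in\mathbb C[x]$ with $s\psi(x)-\psi(rx)=\phi(x)$; fix such $\psi$ and set $H=ud+\psi(h)$. $\mathcal S(r,s)=\{(i,j)\in\mathbb Z\times\mathbb Z: r^i=s^j\}$, an additive subgroup of $\mathbb Z^2$, which is cyclic when $r,s$ are not both roots of unity. Modules are left modules. *)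

(* Defs.v *)
From HB Require Import structures.
From mathcomp Require Import all_boot all_order all_algebra.
Set Implicit Arguments. Unset Strict Implicit. Unset Printing Implicit Defensive.
Import Order.TTheory GRing.Theory Num.Theory.
Local Open Scope ring_scope.

Definition polyact (K : fieldType) (M : lmodType K) (p : {poly K})
  (f : M -> M) (x : M) : M :=
  \sum_(i < size p) p`_i *: iter i f x.

Definition is_root_of_unity (K : fieldType) (x : K) : Prop :=
  exists n : nat, (0 < n)%N /\ x ^+ n = 1.

Definition simple_rep (K : fieldType) (M : lmodType K) (U D Hh : M -> M) : Prop :=
  (exists x : M, x != 0) /\
  forall S : M -> Prop,
    S 0 ->
    (forall (a : K) (x y : M), S x -> S y -> S (a *: x + y)) ->
    (forall x, S x -> S (U x) /\ S (D x) /\ S (Hh x)) ->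
    (forall x, S x -> x = 0) \/ (forall x, S x).

(* Main.v *)
Require Import Defs.
From HB Require Import structures.
From mathcomp Require Import all_boot all_order all_algebra.
Import Order.TTheory GRing.Theory Num.Theory.
Local Open Scope ring_scope.
Set Implicit Arguments.
Lemma iter_addE (K : fieldType) (M : lmodType K) (f : M -> M)
  (fD : forall x y, f (x + y) = f x + f y) n x y :
  iter n f (x + y) = iter n f x + iter n f y.
Proof. by elim: n => [|n IH] //=; rewrite IH fD. Qed.

Lemma iter_scaleE (K : fieldType) (M : lmodType K) (f : M -> M)
  (fZ : forall a x, f (a *: x) = a *: f x) n a x :
  iter n f (a *: x) = a *: iter n f x.
Proof. by elim: n => [|n IH] //=; rewrite IH fZ. Qed.

Lemma iter_commE (K : fieldType) (M : lmodType K) (f g : M -> M) (c : K)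
  (fZ : forall a x, f (a *: x) = a *: f x)
  (H : forall x, f (g x) = c *: g (f x)) n x :
  iter n f (g x) = c ^+ n *: g (iter n f x).
Proof.
elim: n => [|n IH] /=; first by rewrite expr0 scale1r.
by rewrite IH fZ H scalerA -exprSr.
Qed.

Lemma natr_injK (K : fieldType) (charK : [pchar K] =i pred0) (a b : nat) :
  a%:R = b%:R :> K -> a = b.
Proof.
have P := (pcharf0P K).1 charK.
wlog ab : a b / (a <= b)%N.
  move=> W E; case: (leqP a b) => h; first exact: W.
  by symmetry; apply: W; [exact: ltnW|].
move=> E; have : ((b - a)%:R == 0 :> K) by rewrite natrB // E subrr.
rewrite P subn_eq0 => ba; apply/eqP; by rewrite eqn_leq ab ba.
Qed.

Lemma poly_eval0 (K : fieldType) (charK : [pchar K] =i pred0) (p : {poly K}) :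
  (forall x, p.[x] = 0) -> p = 0.
Proof.
move=> H; apply/eqP; apply/negPn/negP => pn0.
pose rs := [seq (i%:R : K) | i <- iota 0 (size p)].
have h1 : all (root p) rs by apply/allP => x _; apply/rootP/H.
have h2 : uniq rs.
  rewrite map_inj_in_uniq ?iota_uniq // => a b _ _; exact: natr_injK.
by have := max_poly_roots pn0 h1 h2; rewrite size_map size_iota ltnn.
Qed.
Definition hom (K : fieldType) (M : lmodType K) (p : {poly K}) (n : nat)
  (A B : M -> M) (x : M) : M :=
  \sum_(k < n.+1) p`_k *: iter k A (iter (n - k) B x).
Arguments hom {K M}.

Lemma homM (K : fieldType) (M : lmodType K) (A B : M -> M)
  (AD : forall x y, A (x + y) = A x + A y) (AZ : forall a x, A (a *: x) = a *: A x)
  (BD : forall x y, B (x + y) = B x + B y) (BZ : forall a x, B (a *: x) = a *: B x)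
  (AB : forall x, A (B x) = B (A x)) (a b : K) (p : {poly K}) n (x : M) :
  (size p <= n.+1)%N ->
  hom ((a *: 'X - b%:P) * p) n.+1 A B x = a *: A (hom p n A B x) - b *: B (hom p n A B x).
Proof.
move=> sp; rewrite /hom.
have A0 : A 0 = 0 by have := AZ 0 0; rewrite !scale0r.
have B0 : B 0 = 0 by have := BZ 0 0; rewrite !scale0r.
rewrite (big_morph A AD A0) (big_morph B BD B0).
rewrite mulrBl.
rewrite (eq_bigr (fun k : 'I_n.+2 => (a * (if (k : nat) == 0%N then 0 else p`_k.-1)) *: iter k A (iter (n.+1 - k) B x) - (b * p`_k) *: iter k A (iter (n.+1 - k) B x))); last first.
  by move=> k _; rewrite coefB -scalerAl coefZ coefXM coefCM scalerBl.
rewrite sumrB; congr (_ - _).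
  rewrite big_ord_recl /= mulr0 scale0r add0r scaler_sumr; apply: eq_bigr => i _.
  by rewrite AZ scalerA add0n /bump leq0n add1n subSS.
rewrite big_ord_recr /= (nth_default 0 sp) mulr0 scale0r addr0 scaler_sumr.
apply: eq_bigr => i _; rewrite BZ scalerA subSn ?(leq_ord i) //=.
have AB' : forall y, A (B y) = 1 *: B (A y) by move=> y; rewrite scale1r AB.
by rewrite (@iter_commE _ _ A B 1 AZ AB') expr1n scale1r.
Qed.

Lemma hom_XnsubC (K : fieldType) (M : lmodType K) (A B : M -> M)
  (d c : K) n (x : M) :
  hom (d *: ('X^(n.+1) - c%:P)) n.+1 A B x = d *: (iter n.+1 A x - c *: iter n.+1 B x).
Proof.
rewrite /hom big_ord_recr big_ord_recl /= big1; last first.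
  by move=> i _; rewrite coefZ coefB coefXn coefC /bump leq0n add1n eqSS (ltn_eqF (ltn_ord i)) subrr mulr0 scale0r.
rewrite !coefZ !coefB !coefXn !coefC /= eqxx subnn /=.
by rewrite sub0r subr0 mulr1 addr0 scalerBr scalerA mulrN scaleNr addrC.
Qed.

Lemma prodQ (K : fieldType) (C s rho : K) (m : nat) (m_pos : (0 < m)%N)
  (s_nz : s != 0) (rho_nz : rho != 0) (C_nz : C != 0) (rm : rho ^+ m = s ^+ m)
  (prim : forall k, (0 < k < m)%N -> rho ^+ k != s ^+ k) :
  \prod_(0 <= i < m) (s ^+ i.+1 *: 'X - (C * rho ^+ i.+1)%:P)
  = (\prod_(0 <= i < m) s ^+ i.+1) *: ('X^m - (C ^+ m)%:P).
Proof.
pose w := rho / s.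
have w_nz : w != 0 by rewrite mulf_neq0 ?invr_eq0.
have fE : forall i, s ^+ i.+1 *: 'X - (C * rho ^+ i.+1)%:P
   = (s ^+ i.+1)%:P * ('X - (C * w ^+ i.+1)%:P).
  move=> i; rewrite mulrBr mul_polyC -polyCM; congr (_ - _%:P).
  by rewrite expr_div_n mulrCA [s ^+ _ * _]mulrCA mulfV ?mulr1 // expf_neq0.
under eq_bigr do rewrite fE.
rewrite big_split /= -rmorph_prod mul_polyC; congr (_ *: _).
have wm : w ^+ m = 1 by rewrite expr_div_n rm divff // expf_neq0.
pose rs := [seq C * w ^+ i.+1 | i <- index_iota 0 m].
have := @all_roots_prod_XsubC _ ('X^m - (C ^+ m)%:P) rs.
rewrite lead_coefXnsubC // scale1r big_map => -> //.
- by rewrite size_XnsubC // size_map size_iota subn0.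
- apply/allP => z /mapP [i _ ->]; rewrite rootE !hornerE.
  by rewrite exprMn -exprM mulnC exprM wm expr1n mulr1 subrr.
rewrite uniq_rootsE map_inj_in_uniq ?iota_uniq // => a b.
rewrite !mem_iota !add0n subn0 => am bm /(mulfI C_nz) E.
have key : forall a b, (a < b < m)%N -> w ^+ a.+1 = w ^+ b.+1 -> False.
  move=> a' b' /andP [ab bm'] E'.
  have : w ^+ (b' - a') = 1.
    apply: (mulfI (expf_neq0 a'.+1 w_nz)); rewrite mulr1 -exprD.
    by rewrite addSn subnKC ?(ltnW ab) // E'.
  rewrite expr_div_n => /divr1_eq; apply/eqP/prim.
  by rewrite subn_gt0 ab /= (leq_ltn_trans (leq_subr _ _) bm').
case: (ltngtP a b) => // h.
- by exfalso; apply: (key a b); rewrite ?h ?bm.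
- by exfalso; apply: (key b a); rewrite ?h ?am.
Qed.

Lemma polyact_monom (K : fieldType) (M : lmodType K) (c : K) (j : nat)
  (f : M -> M) (x : M) : polyact (c *: 'X^j) f x = c *: iter j f x.
Proof.
have [->|cn0] := eqVneq c 0.
  by rewrite scale0r /polyact size_poly0 big_ord0 scale0r.
rewrite /polyact size_scale // size_polyXn big_ord_recr /= big1 ?add0r.
  by rewrite coefZ coefXn eqxx mulr1.
by move=> i _; rewrite coefZ coefXn (ltn_eqF (ltn_ord i)) mulr0 scale0r.
Qed.

Unset Implicit Arguments.

Theorem mainTheorem12
  (K : closedFieldType) (charK : [pchar K] =i pred0)
  (r s : K) (r_nz : r != 0) (s_nz : s != 0)
  (phi psi : {poly K})
  (conf : forall x : K, s * psi.[x] - psi.[r * x] = phi.[x])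
  (not_both_roots : ~ (is_root_of_unity r /\ is_root_of_unity s))
  (j m : nat) (m_pos : (0 < m)%N)
  (S_gen : forall i k : int, r ^ i = s ^ k <->
                             exists t : int, i = t * (j * m)%N%:Z /\ k = t * m%:Z)
  (C : K) (C_nz : C != 0) (psi_def : psi = C *: 'X^j)
  (M : lmodType K) (U D Hh : {linear M -> M})
  (rel_hu : forall x, Hh (U x) = r *: U (Hh x))
  (rel_dh : forall x, D (Hh x) = r *: Hh (D x))
  (rel_du : forall x, D (U x) - s *: U (D x) = polyact phi Hh x)
  (simpleM : simple_rep U D Hh)
  (Hop := fun x : M => U (D x) + polyact psi Hh x)
  (hM : forall y : M, exists x, Hh x = y)
  (HM : forall y : M, exists x, Hop x = y)
  (ann : forall x : M, iter m Hop x - C ^+ m *: iter (j * m) Hh x = 0) :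
  (forall x : M, iter m U x = 0) \/ (forall x : M, iter m D x = 0).
Proof.
have psiE : forall x, polyact psi Hh x = C *: iter j Hh x.
  by move=> x; rewrite psi_def polyact_monom.
have phiE : phi = (C * (s - r ^+ j)) *: 'X^j.
  apply/eqP; rewrite -subr_eq0; apply/eqP; apply: (poly_eval0 charK) => x.
  rewrite !hornerE -conf psi_def !hornerZ !hornerXn exprMn.
  by rewrite mulrBr mulrBl !mulrA [s * C]mulrC subrr.
have phiact : forall x, polyact phi Hh x = (C * (s - r ^+ j)) *: iter j Hh x.
  by move=> x; rewrite phiE polyact_monom.
have HopE : forall x, Hop x = U (D x) + C *: iter j Hh x.
  by move=> x; rewrite /Hop psiE.
have UD : forall x y, U (x + y) = U x + U y by move=> x y; rewrite linearD.
have DD : forall x y, D (x + y) = D x + D y by move=> x y; rewrite linearD.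
have HhD : forall x y, Hh (x + y) = Hh x + Hh y by move=> x y; rewrite linearD.
have UZ : forall a x, U (a *: x) = a *: U x by move=> a x; rewrite linearZ.
have DZ : forall a x, D (a *: x) = a *: D x by move=> a x; rewrite linearZ.
have HhZ : forall a x, Hh (a *: x) = a *: Hh x by move=> a x; rewrite linearZ.
have BD : forall x y, iter j Hh (x + y) = iter j Hh x + iter j Hh y.
  by move=> x y; rewrite iter_addE.
have BZ : forall a x, iter j Hh (a *: x) = a *: iter j Hh x.
  by move=> a x; rewrite iter_scaleE.
have AD : forall x y, Hop (x + y) = Hop x + Hop y.
  by move=> x y; rewrite !HopE DD UD BD scalerDr addrACA.
have AZ : forall a x, Hop (a *: x) = a *: Hop x.
  by move=> a x; rewrite !HopE DZ UZ BZ scalerDr !scalerA mulrC.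
have cHD : forall x, Hh (D x) = r^-1 *: D (Hh x).
  by move=> x; rewrite rel_dh scalerA mulVf // scale1r.
have cBD : forall x, D (iter j Hh x) = r ^+ j *: iter j Hh (D x).
  move=> x; rewrite (@iter_commE _ _ Hh D r^-1 HhZ cHD) scalerA exprVn.
  by rewrite mulfV ?scale1r // expf_neq0.
have cHA : forall x, Hh (Hop x) = 1 *: Hop (Hh x).
  move=> x; rewrite scale1r !HopE HhD HhZ rel_hu cHD UZ scalerA mulfV // scale1r.
  by rewrite -iterS iterSr.
have AB : forall x, Hop (iter j Hh x) = iter j Hh (Hop x).
  by move=> x; rewrite (@iter_commE _ _ Hh Hop 1 HhZ cHA) expr1n scale1r.
have DU : forall x, D (U x) = s *: Hop x - (C * r ^+ j) *: iter j Hh x.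
  move=> x; have := rel_du x; rewrite phiact => /eqP; rewrite subr_eq => /eqP ->.
  rewrite HopE scalerDr scalerA mulrBr scalerBl.
  by rewrite [s * C]mulrC addrC addrA.
have DA : forall x, D (Hop x) = s *: Hop (D x).
  by move=> x; rewrite [Hop x]HopE DD DU DZ cBD scalerA subrK.
have iterDU : forall k x, iter k.+1 D (U x) =
    s ^+ k.+1 *: Hop (iter k D x) - (C * r ^+ j ^+ k.+1) *: iter j Hh (iter k D x).
  elim=> [|k IH] x; first by rewrite /= DU !expr1.
  rewrite iterS IH linearB /= !linearZ /= DA cBD !scalerA.
  by rewrite -exprSr scalerN scalerA -mulrA -exprSr scalerN.
have rsm : r ^+ (j * m) = s ^+ m.
  have := (S_gen (Posz (j * m)) (Posz m)).2; rewrite -!exprnP; apply.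
  by exists 1; rewrite !mul1r.
have [m' Em] : exists m', m = m'.+1 by exists m.-1; rewrite prednK.
have rsm' : r ^+ (j * m'.+1) = s ^+ m'.+1 by rewrite -Em.
have keyDU : forall x, iter m D (U x) = s ^+ m *: U (iter m D x).
  move=> x; rewrite Em iterDU -exprM rsm' /= HopE scalerDr scalerA mulrC.
  by rewrite addrK.
have cDm : forall x, iter m D (Hh x) = r ^+ m *: Hh (iter m D x).
  by move=> x; rewrite (@iter_commE _ _ D Hh r DZ rel_dh).
have rj_nz : r ^+ j != 0 by rewrite expf_neq0.
have prim : forall k, (0 < k < m)%N -> (r ^+ j) ^+ k != s ^+ k.
  move=> k /andP [k0 km]; apply/eqP => E.
  have := (S_gen (Posz (j * k)) (Posz k)).1; rewrite -!exprnP exprM E.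
  case=> // t [_ kt].
  case: (lerP t 0) => ht.
    have : (Posz k <= 0) by rewrite kt mulr_le0_ge0.
    by rewrite lez0_nat => /eqP k0'; move: k0; rewrite k0'.
  have : (Posz m <= Posz k) by rewrite kt ler_peMl // -gtz0_ge1.
  by rewrite lez_nat leqNgt km.
pose Q k := \prod_(0 <= i < k) (s ^+ i.+1 *: 'X - (C * r ^+ j ^+ i.+1)%:P).
have sf : forall a b : K, (size (a *: 'X - b%:P : {poly K})%R <= 2)%N.
  move=> a b; rewrite -mul_polyC -polyCN size_MXaddC; case: ifP => //= _.
  by rewrite ltnS size_polyC_leq1.
have sizeQ : forall k, (size (Q k) <= k.+1)%N.
  elim=> [|k IH]; first by rewrite /Q big_geq // size_poly1.
  rewrite /Q big_nat_recr //=; apply: (leq_trans (size_polyMleq _ _)).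
  rewrite -subn1 leq_subLR add1n; apply: (leq_trans (leq_add IH (sf _ _))).
  by rewrite addn2.
have DmUm : forall k x, iter k D (iter k U x) = hom (Q k) k Hop (iter j Hh) x.
  elim=> [|k IH] x.
    by rewrite /hom big_ord1 /Q big_geq // coef1 /= scale1r.
  rewrite [iter k.+1 U x]iterS iterDU IH /Q big_nat_recr //= [in RHS]mulrC.
  by rewrite homM // sizeQ.
have Qm : Q m = (\prod_(0 <= i < m) s ^+ i.+1) *: ('X^m - (C ^+ m)%:P).
  by apply: prodQ => //; rewrite -exprM.
have final : forall x, iter m D (iter m U x) = 0.
  move=> x; rewrite DmUm Qm Em hom_XnsubC -Em.
  by rewrite -(iterM m j Hh x) mulnC ann scaler0.
have [_ simp] := simpleM.
have H0 : iter m D 0 = 0 by elim: (m) => //= n ->; rewrite linear0.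
have Hc : forall (a : K) (x y : M), iter m D x = 0 -> iter m D y = 0 ->
    iter m D (a *: x + y) = 0.
  by move=> a x y Sx Sy; rewrite iter_addE // iter_scaleE // Sx Sy scaler0 addr0.
have Hs : forall x, iter m D x = 0 ->
    iter m D (U x) = 0 /\ iter m D (D x) = 0 /\ iter m D (Hh x) = 0.
  move=> x Sx; split; first by rewrite keyDU Sx linear0 scaler0.
  split; first by rewrite -iterSr iterS Sx linear0.
  by rewrite cDm Sx linear0 scaler0.
have [Hall|Hall] := simp (fun x => iter m D x = 0) H0 Hc Hs.
- by left => x; apply: Hall; apply: final.
- by right.
Qed.
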